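(* Let $p$ be an odd prime and $r$ an integer with $p \nmid r$. Let $$f_{r,p}(x) = \frac{1}{2\sqrt{2}}\left((1+\sqrt{2})^r (x+\sqrt{2})^p - (1-\sqrt{2})^r (x - \sqrt{2})^p\right) \in \mathbb{Z}[x].$$ Then the discriminant of $f_{r,p}$ is $(-1)^{\frac{p(p-1)}{2}} 2^{\frac{3}{2}(p-1)(p-2)} p^p$. *)

(* Defs.v *)
From mathcomp Require Import all_boot all_order all_algebra all_field.
Set Implicit Arguments. Unset Strict Implicit. Unset Printing Implicit Defensive.
Import Order.TTheory GRing.Theory Num.Theory.
Local Open Scope ring_scope.

(* The roots are the list provided by closed_field_poly_normal
   (f = lc(f) * prod (X - r_i)); the value does not depend on its order. *)
Definition poly_roots (F : closedFieldType) (f : {poly F}) : seq F :=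
  sval (closed_field_poly_normal f).

Definition disc (F : closedFieldType) (f : {poly F}) : F :=
  let rs := poly_roots f in
  let n := size rs in
  lead_coef f ^+ (2 * n - 2) *
  \prod_(i < n) \prod_(j < n | (i < j)%N) (rs`_i - rs`_j) ^+ 2.

(* f_{r,p}(x) = ((1+√2)^r (x+√2)^p - (1-√2)^r (x-√2)^p) / (2√2), viewed in C[x]
   (it has integer coefficients; the discriminant is the same over Z and C). *)
Definition f_rp (r : int) (p : nat) : {poly algC} :=
  let s := sqrtC 2 in
  (2 * s)^-1 *: ((1 + s) ^ r *: ('X + s%:P) ^+ p - (1 - s) ^ r *: ('X - s%:P) ^+ p).

(* Main.v *)
Require Import Defs.
From mathcomp Require Import all_boot all_order all_algebra all_field.
From mathcomp Require Import ring zify.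
From Stdlib Require Import Lia.
Import Order.TTheory GRing.Theory Num.Theory.
Local Open Scope ring_scope.

Lemma split_neq (R : Type) (idx : R) (op : Monoid.com_law idx) n (G : 'I_n -> 'I_n -> R) :
  \big[op/idx]_(i < n) \big[op/idx]_(j < n | j != i) G i j =
  op (\big[op/idx]_(i < n) \big[op/idx]_(j < n | (i < j)%N) G i j)
     (\big[op/idx]_(i < n) \big[op/idx]_(j < n | (i < j)%N) G j i).
Proof.
rewrite (eq_bigr (fun i : 'I_n => op (\big[op/idx]_(j < n | (i < j)%N) G i j)
                              (\big[op/idx]_(j < n | (j < i)%N) G i j))); last first.
  move=> i _; rewrite (bigID (fun j : 'I_n => (i < j)%N)) /=; congr (op _ _).
    by apply: eq_bigl => j; rewrite -val_eqE /=; case: ltngtP.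
  by apply: eq_bigl => j; rewrite -val_eqE /=; case: ltngtP.
rewrite big_split /=; congr (op _ _).
rewrite (exchange_big_dep xpredT) //=.
Qed.

Lemma count_pairs n :
  (\sum_(i < n) \sum_(j < n | (i < j)%N) 1 = (n * (n - 1)) %/ 2)%N.
Proof.
have H := @split_neq nat 0%N addn n (fun (i j : 'I_n) => 1%N).
have E : (\sum_(i < n) \sum_(j < n | j != i) 1 = n * (n - 1))%N.
  rewrite (eq_bigr (fun _ => n - 1)%N).
    by rewrite sum_nat_const card_ord.
  move=> i _; rewrite sum1_card.
  have -> : #|[pred j : 'I_n | j != i]| = #|predC1 i| by apply: eq_card.
  by rewrite cardC1 card_ord subn1.
rewrite -E H /=; rewrite addnn -muln2 mulnK //.
Qed.

Lemma sign_pairs (F : comRingType) n (g : 'I_n -> F) :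
 \prod_(i < n) \prod_(j < n | (i < j)%N) (g i - g j) ^+ 2 =
 (-1) ^+ ((n * (n - 1)) %/ 2) * \prod_(i < n) \prod_(j < n | j != i) (g i - g j).
Proof.
rewrite (@split_neq F 1 *%R n) /= -big_split /= -count_pairs -prodrXr -big_split /=.
apply: eq_bigr => i _; rewrite -prodrXr -!big_split /=; apply: eq_bigr => j _.
by rewrite expr1 -opprB sqrrN mulN1r mulNr opprK expr2.
Qed.

Section G.
Variable F : closedFieldType.
Variable f : {poly F}.
Hypothesis f0 : f != 0.
Let rs := poly_roots f.
Let n := size rs.
Let lc := lead_coef f.

Lemma lc_neq0 : lc != 0. Proof. by rewrite lead_coef_eq0. Qed.

Lemma f_ord : f = lc *: \prod_(j < n) ('X - (rs`_j)%:P).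
Proof.
rewrite /n /lc /rs /poly_roots; case: (closed_field_poly_normal f) => r /= Hr.
by rewrite {1}Hr (big_nth 0) big_mkord.
Qed.

Lemma size_f : size f = n.+1.
Proof. rewrite {1}f_ord size_scale; last exact: lc_neq0. by rewrite size_prod_XsubC [index_enum _]unlock -enumT size_enum_ord. Qed.

Lemma f_horner x : f.[x] = lc * \prod_(j < n) (x - rs`_j).
Proof.
rewrite {1}f_ord hornerZ horner_prod; congr (_ * _).
by apply: eq_bigr => j _; rewrite hornerXsubC.
Qed.

Lemma f_root (i : 'I_n) : f.[rs`_i] = 0.
Proof. by rewrite f_horner (bigD1 i) //= subrr mul0r mulr0. Qed.

Lemma f_deriv (i : 'I_n) : f^`().[rs`_i] = lc * \prod_(j < n | j != i) (rs`_i - rs`_j).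
Proof.
rewrite {1}f_ord (bigD1 i) //= derivZ derivM derivXsubC hornerZ hornerD hornerM hornerM.
rewrite hornerXsubC subrr hornerC mul0r addr0 mul1r horner_prod; congr (_ * _).
by apply: eq_bigr => j _; rewrite hornerXsubC.
Qed.

Lemma disc_deriv :
  disc f * lc ^+ n = (-1)^+((n*(n-1))%/2) * lc ^+ (2*n-2) * \prod_(i < n) f^`().[rs`_i].
Proof.
rewrite /disc /=.
change (lc ^+ (2*n-2) * \prod_(i<n) \prod_(j<n | (i<j)%N) (rs`_i - rs`_j)^+2 * lc^+n = (-1)^+((n*(n-1))%/2) * lc ^+ (2*n-2) * \prod_(i < n) f^`().[rs`_i]).
rewrite sign_pairs.
rewrite (eq_bigr _ (fun i _ => f_deriv i)) big_split /= prodr_const card_ord.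
by ring.
Qed.
End G.

Lemma final_alg (F : fieldType) (D S lc U V Pi a b w pR : F) (p : nat) :
 lc != 0 -> a != 0 -> b != 0 -> w != 0 -> odd p -> (1 < p)%N ->
 D * lc^+p = S * lc^+(2 * p - 2)%N * Pi ->
 Pi * U * V = (-(pR*a))^+p * U^+p ->
 lc * ((-1)^+p * U) = b * w^+(p - 1)%N ->
 lc * ((-1)^+p * V) = a * w^+(p - 1)%N ->
 D = S * pR^+p * (a*b)^+(p - 1)%N * w^+((p - 1)*(p - 2))%N.
Proof.
move=> lc0 a0 b0 w0 op p1 E1 E2 HU HV.
have sg : (-1)^+p = -1 :> F by rewrite -signr_odd op expr1.
rewrite sg in HU HV.
set X := lc * U; set Y := lc * V; set M := (-(pR*a))^+p.
have Elc : lc^+(2 * p - 2)%N * lc * lc = lc^+p * lc^+p.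
  rewrite -!exprSr -exprD; congr (_ ^+ _); case: p p1 {op E1 E2 HU HV sg M} => //; lia.
have S1 : D * (X * Y) = S * M * X^+p.
  apply: (mulIf (expf_neq0 p lc0)).
  rewrite /X /Y exprMn.
  transitivity ((D*lc^+p) * (lc*lc) * (U*V)); first by ring.
  rewrite E1; transitivity (S * (lc^+(2 * p - 2)%N*lc*lc) * (Pi*U*V)); first by ring.
  rewrite E2 Elc /M; ring.
set W := w^+(p - 1)%N.
have HX : X = -(b*W) by rewrite -HU /X; ring.
have HY : Y = -(a*W) by rewrite -HV /Y; ring.
have oddN : forall x : F, (-x)^+p = -(x^+p) by move=> x; rewrite exprNn sg mulN1r.
rewrite HX HY /M !oddN !exprMn in S1.
have W0 : W != 0 by rewrite expf_neq0.
have K : a * b * W * W != 0 by rewrite !mulf_neq0.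
apply: (mulIf K).
have [q Hq] : exists q, p = q.+2 by exists p.-2; lia.
subst p.
have -> : ((q.+2 - 1) * (q.+2 - 2) = q.+1 * q)%N by lia.
have -> : (q.+2 - 1 = q.+1)%N by lia.
rewrite exprM -/W.
transitivity (D * (-(b*W) * -(a*W))); first by ring.
rewrite S1 !exprMn (exprS a) (exprS b) (exprS W) (exprS W).
ring.
Qed.

Section S.
Variables (s a b : algC) (p : nat).
Hypotheses (s2 : s^+2 = 2) (a0 : a != 0) (b0 : b != 0) (ab : a != b)
  (ab2 : (a*b)^+2 = 1) (op : odd p) (p3 : (2 < p)%N).

Let g := (2*s)^-1 *: (a *: ('X + s%:P)^+p - b *: ('X - s%:P)^+p).

Lemma s0 : s != 0.
Proof. apply/eqP => h; move: s2; rewrite h expr0n /= => /eqP; by rewrite eq_sym pnatr_eq0. Qed.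

Lemma g_horner x : g.[x] = (2*s)^-1 * (a * (x+s)^+p - b*(x-s)^+p).
Proof. by rewrite /g !hornerE. Qed.

Lemma g_deriv x : g^`().[x] = (2*s)^-1 * (a * ((x+s)^+p.-1 *+ p) - b * ((x-s)^+p.-1 *+ p)).
Proof. by rewrite /g !derivE !deriv_exp !derivE !hornerE !hornerMn !hornerE. Qed.

Lemma XaddC : 'X + s%:P = 'X - (-s)%:P :> {poly algC}.
Proof. by rewrite polyCN opprK. Qed.

Lemma coef_exp (c : algC) : (('X - c%:P)^+p)`_p = 1.
Proof.
have := lead_coefE (('X - c%:P)^+p).
by rewrite lead_coef_exp lead_coefXsubC expr1n size_exp_XsubC /= => <-.
Qed.

Lemma g_coefp : g`_p = (2*s)^-1 * (a - b).
Proof. by rewrite /g coefZ coefB !coefZ XaddC !coef_exp !mulr1. Qed.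

Lemma g_size : size g = p.+1.
Proof.
apply/anti_leq/andP; split.
  apply: leq_trans (size_scale_leq _ _) _.
  apply: leq_trans (size_polyD _ _) _; rewrite size_polyN geq_max.
  by rewrite !(leq_trans (size_scale_leq _ _)) // ?XaddC size_exp_XsubC.
rewrite ltnNge; apply/negP => /(nth_default 0); rewrite g_coefp => /eqP.
have h2 : (2:algC) != 0 by rewrite pnatr_eq0.
by rewrite mulf_eq0 invr_eq0 mulf_eq0 (negbTE s0) (negbTE h2) subr_eq0 (negbTE ab).
Qed.

Lemma root_eq z : g.[z] = 0 -> g^`().[z] * (z + s) * (z - s) = - (p%:R * a) * (z + s)^+p.
Proof.
have h2 : (2:algC) != 0 by rewrite pnatr_eq0.
rewrite g_horner => /eqP; rewrite mulf_eq0 invr_eq0 mulf_eq0 (negbTE s0) (negbTE h2) /=.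
rewrite subr_eq0 => /eqP E.
have [q Hq] : exists q, p = q.+1 by exists p.-1; lia.
have Hq1 : p.-1 = q by rewrite Hq.
have Ep1 : (z+s)^+p = (z+s)*(z+s)^+q by rewrite Hq exprS.
have Ep2 : (z-s)^+p = (z-s)*(z-s)^+q by rewrite Hq exprS.
rewrite Ep1 Ep2 !mulrA in E.
rewrite g_deriv Hq1 Ep1 -(mulr_natr ((z+s)^+q)) -(mulr_natr ((z-s)^+q)).
transitivity ((2*s)^-1 * p%:R * ((a*(z+s)*(z+s)^+q)*(z-s) - (b*(z-s)*(z-s)^+q)*(z+s))); first by ring.
rewrite -E; field; exact: s0.
Qed.


Lemma disc_g : disc g = (-1)^+((p*(p-1))%/2) * 2^+((3*((p - 1)*(p - 2)))%/2) * p%:R^+p.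
Proof.
have g0 : g != 0 by rewrite -size_poly_eq0 g_size.
have hn : size (poly_roots g) = p by have := @size_f _ _ g0; rewrite g_size => -[].
have D := @disc_deriv _ g.
set rs := poly_roots g in hn D.
set n := size rs in hn D.
set lc := lead_coef g in D.
have lc0 : lc != 0 := @lc_neq0 _ _ g0.
have h2 : (2:algC) != 0 by rewrite pnatr_eq0.
have w0 : 2 * s != 0 by rewrite mulf_neq0 ?s0.
pose U := \prod_(i < n) (rs`_i + s). pose V := \prod_(i < n) (rs`_i - s).
pose Pi := \prod_(i < n) g^`().[rs`_i].
have E2 : Pi * U * V = (-(p%:R * a))^+n * U^+n.
  rewrite /Pi /U /V -!big_split /=.
  transitivity (\prod_(i<n) (-(p%:R*a) * (rs`_i+s)^+p)).
    by apply: eq_bigr => i _; apply: root_eq; exact: f_root.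
  by rewrite big_split prodr_const card_ord prodrXl hn.
have sg : forall x : algC, (-x)^+p = - x^+p.
  by move=> x; rewrite exprNn -signr_odd op expr1 mulN1r.
have ep : (2*s)^+p = (2*s) * (2*s)^+(p-1).
  by rewrite -exprS; congr (_ ^+ _); lia.
have Pn : forall c : algC, \prod_(j < n) (c - rs`_j) = (-1)^+n * \prod_(j < n) (rs`_j - c).
  move=> c; rewrite -[n in (-1)^+n]card_ord -prodr_const -big_split /=.
  by apply: eq_bigr => j _; rewrite mulN1r opprB.
have z0 : (0:algC)^+p = 0.
  by rewrite expr0n (_ : (p == 0)%N = false) //; lia.
have HU : lc * ((-1)^+n * U) = b * (2*s)^+(n-1).
  have := @f_horner _ g (-s); rewrite -/rs -/n -/lc Pn.
  have -> : \prod_(j < n) (rs`_j - - s) = U by apply: eq_bigr => j _; rewrite opprK.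
  move=> <-; rewrite g_horner hn addNr z0.
  rewrite mulr0 sub0r (_ : -s - s = -(2*s)); last by ring.
  rewrite sg ep; field; exact: s0.
have HV : lc * ((-1)^+n * V) = a * (2*s)^+(n-1).
  have := @f_horner _ g s; rewrite -/rs -/n -/lc Pn -/V.
  move=> <-; rewrite g_horner hn subrr z0.
  rewrite mulr0 subr0 (_ : s + s = 2*s); last by ring.
  rewrite ep; field; exact: s0.
have on : odd n by rewrite hn.
have n1 : (1 < n)%N by rewrite hn; lia.
have := @final_alg _ _ _ _ _ _ _ _ _ _ _ _ lc0 a0 b0 w0 on n1 D E2 HU HV.
rewrite hn => ->.
have [k hk] : exists k, p = (k*2).+1.
  by exists p./2; rewrite -{1}(odd_double_half p) op -muln2 add1n.
have hp1 : (p - 1 = k * 2)%N by rewrite hk subn1.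
have hm : ((p - 1)*(p - 2) = (k*(p - 2))*2)%N by rewrite hp1 mulnAC.
rewrite hm hp1 mulnA mulnK //.
rewrite (_ : (3 * (k * (p - 2) * 2)) %/ 2 = 3 * (k*(p - 2)))%N; last by rewrite mulnA mulnK.
rewrite (mulnC k 2) [(a*b)^+(2*k)]exprM ab2 expr1n mulr1.
rewrite (mulnC (k*(p - 2))%N 2%N) [(2*s)^+_]exprM [2^+(3*_)]exprM [(2*s)^+2]exprMn s2.
have -> : (2:algC)^+2 * 2 = 2^+3 by rewrite !exprS expr0 !mulr1 mulrA.
ring.
Qed.
End S.

Lemma sqrt2_facts : 1 < sqrtC (2:algC) /\ sqrtC (2:algC) < 2.
Proof.
have h0 : 0 <= sqrtC 2 :> algC by rewrite sqrtC_ge0 ler0n.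
split.
  by rewrite -ltr_sqr ?qualifE /= ?ler01 // expr1n sqrtCK ltr1n.
by rewrite -ltr_sqr ?qualifE /= ?ler0n // sqrtCK -natrX ltr_nat.
Qed.

Lemma pow_neq (m : nat) : (0 < m)%N -> (1 + sqrtC (2:algC))^+m != (1 - sqrtC 2)^+m.
Proof.
move=> m0; have [h1 h2] := sqrt2_facts; set s := sqrtC (2:algC) in h1 h2 *.
apply/negP => /eqP /(congr1 Num.norm); rewrite !normrX.
have n1 : `|1 + s| = 1 + s by rewrite ger0_norm // addr_ge0 // ltW // (lt_trans ltr01).
have n2 : `|1 - s| = s - 1 by rewrite ler0_norm ?opprB // subr_le0 ltW.
rewrite n1 n2 => E.
have : 1 < (1 + s)^+m by rewrite exprn_egt1 ?ltrDl ?(lt_trans ltr01) // -lt0n.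
have : (s - 1)^+m < 1.
  rewrite exprn_ilt1 ?subr_ge0 ?ltW // -?lt0n //.
  by rewrite ltrBlDr.
by rewrite E => /lt_trans H /H; rewrite ltxx.
Qed.

Theorem theorem4p13 (p : nat) (r : int) :
  prime p -> odd p -> ~~ (p%:Z %| r)%Z ->
  disc (f_rp r p) =
    (-1) ^+ ((p * (p - 1)) %/ 2) * 2 ^+ ((3 * ((p - 1) * (p - 2))) %/ 2) * (p%:R) ^+ p.
Proof.
move=> pp op pr.
have r0 : r != 0 by apply: contraNneq pr => ->; rewrite dvdz0.
have p3 : (2 < p)%N.
  have := prime_gt1 pp; case: p op {pp pr} => // [[|[|q]]] //.
have [h1 h2] := sqrt2_facts.
set s := sqrtC (2:algC) in h1 h2.
have s2 : s^+2 = 2 by rewrite sqrtCK.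
have up : 1 + s != 0 by rewrite gt_eqF // addr_gt0 // (lt_trans ltr01).
have um : 1 - s != 0 by rewrite subr_eq0 lt_eqF.
have a0 : (1 + s)^r != 0 by rewrite expfz_neq0.
have b0 : (1 - s)^r != 0 by rewrite expfz_neq0.
have ab2 : ((1 + s)^r * (1 - s)^r)^+2 = 1.
  rewrite -exprzMl ?unitfE // (_ : (1 + s) * (1 - s) = -1); last first.
    by rewrite mulrC -subr_sqr expr1n s2; rewrite (_ : (2:algC) = 1 + 1) // opprD addrA subrr add0r.
  by rewrite expr2 -exprzMl ?unitfE ?oppr_eq0 ?oner_eq0 // mulrNN mulr1 exp1rz.
have ab : (1 + s)^r != (1 - s)^r.
  case: r r0 {pr a0 b0 ab2} => m m0.
    by apply: pow_neq; rewrite lt0n; move: m0; apply: contra => /eqP ->.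
  apply/negP => /eqP E; move/negP: (@pow_neq m.+1 (ltn0Sn m)); apply; apply/eqP.
  by apply: invr_inj; exact: E.
rewrite /f_rp -/s. exact: (@disc_g s _ _ p s2 a0 b0 ab ab2 op p3).
Qed.
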